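(* Let $A_0,A_1,A_2\in\mathbb{R}[x]$ with $A_2\not\equiv0$, let $I$ be an open interval on which $A_2$ has no zeros, and let $g_0,g_1\in\mathbb{R}[x,y]$ with $g_1\not\equiv0$ and $\partial_y(g_0/g_1)\not\equiv0$. Let $\mathcal{X}=P\partial_x+Q\partial_y$ with $$P=A_2\left(g_0\,\partial_y g_1-g_1\,\partial_y g_0\right),\qquad Q=A_0g_1^2+A_1g_1g_0+A_2g_0^2+A_2\left(g_1\,\partial_x g_0-g_0\,\partial_x g_1\right).$$ Let $\{w_1,w_2\}$ be a fundamental system of solutions on $I$ of $A_2w''+A_1w'+A_0w=0$ and define $f_i(x,y)=g_1(x,y)w_i'(x)-g_0(x,y)w_i(x)$, $i=1,2$. Then on the open set $U=\{(x,y)\in I\times\mathbb{R}: f_2(x,y)\neq0\}$ the function $$H=\frac{f_1}{f_2}=\frac{g_1 w_1'-g_0w_1}{g_1w_2'-g_0w_2}$$ is a first integral of $\mathcal{X}$.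
   Context: A first integral of $\mathcal{X}=P\partial_x+Q\partial_y$ on an open set $U$ is a $C^1$ function $H:U\to\mathbb{R}$ with $P\,\partial_xH+Q\,\partial_yH=0$ on $U$ which is not constant on any nonempty open subset of $U$. *)

(* Defs.v *)
From HB Require Import structures.
From mathcomp Require Import all_boot all_order all_algebra polyXY.
From mathcomp Require Import all_classical all_reals all_analysis.
Set Implicit Arguments. Unset Strict Implicit. Unset Printing Implicit Defensive.
Import Order.TTheory GRing.Theory Num.Theory.
Import numFieldNormedType.Exports.
Local Open Scope classical_set_scope.
Local Open Scope ring_scope.

(* Bivariate polynomials g in R[x,y] are represented, following polyXY, as
   {poly {poly R}} whose outer variable is x and whose coefficients are
   polynomials in y; g.[x, y] is the evaluation at (x,y). *)
Section Defs.
Variable R : realType.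

Definition dX (g : {poly {poly R}}) : {poly {poly R}} := deriv g.
Definition dY (g : {poly {poly R}}) : {poly {poly R}} := map_poly (@deriv R) g.
Definition liftX (A : {poly R}) : {poly {poly R}} := map_poly polyC A.

Definition Pfield (A2 : {poly R}) (g0 g1 : {poly {poly R}}) : {poly {poly R}} :=
  liftX A2 * (g0 * dY g1 - g1 * dY g0).
Definition Qfield (A0 A1 A2 : {poly R}) (g0 g1 : {poly {poly R}}) : {poly {poly R}} :=
  liftX A0 * g1 ^+ 2 + liftX A1 * g1 * g0 + liftX A2 * g0 ^+ 2
  + liftX A2 * (g1 * dX g0 - g0 * dX g1).

Definition pdx (H : R * R -> R) (p : R * R) : R := derive1 (fun t => H (t, p.2)) p.1.
Definition pdy (H : R * R -> R) (p : R * R) : R := derive1 (fun t => H (p.1, t)) p.2.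

Definition C1_on (U : set (R * R)) (H : R * R -> R) : Prop :=
  forall p, U p ->
    [/\ derivable (fun t => H (t, p.2)) p.1 1,
        derivable (fun t => H (p.1, t)) p.2 1,
        {for p, continuous (pdx H)} &
        {for p, continuous (pdy H)}].

Definition first_integral (P Q : R * R -> R) (U : set (R * R)) (H : R * R -> R) : Prop :=
  [/\ C1_on U H,
      (forall p, U p -> P p * pdx H p + Q p * pdy H p = 0) &
      (forall V : set (R * R), open V -> V `<=` U -> V !=set0 ->
         exists p q, [/\ V p, V q & H p != H q])].

Definition ode_solution (A0 A1 A2 : {poly R}) (I : set R) (w : R -> R) : Prop :=
  forall x, I x ->
    [/\ derivable w x 1, derivable (derive1 w) x 1 &
        A2.[x] * derive1 (derive1 w) x + A1.[x] * derive1 w x + A0.[x] * w x = 0].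

Definition fundamental_system (A0 A1 A2 : {poly R}) (I : set R) (w1 w2 : R -> R) : Prop :=
  [/\ ode_solution A0 A1 A2 I w1, ode_solution A0 A1 A2 I w2 &
      forall c1 c2 : R, (forall x, I x -> c1 * w1 x + c2 * w2 x = 0) ->
        c1 = 0 /\ c2 = 0].

End Defs.

(* Main.v *)
Require Import Defs.
From HB Require Import structures.
From mathcomp Require Import all_boot all_order all_algebra polyXY.
From mathcomp Require Import all_classical all_reals all_analysis.
From mathcomp Require Import ring lra.
Import Order.TTheory GRing.Theory Num.Theory.
Import numFieldNormedType.Exports.
Local Open Scope classical_set_scope.
Local Open Scope ring_scope.
Section H.
Variable R : realType.
Implicit Types (g : {poly {poly R}}).

Lemma evX g x y : g.[x, y] = (map_poly (horner_eval y) g).[x].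
Proof.
have := horner_map (horner_eval y) g x%:P.
by rewrite /= horner_evalE hornerC => ->.
Qed.

Lemma ev_liftX (A : {poly R}) x y : (liftX A).[x, y] = A.[x].
Proof. by rewrite /liftX horner_map /= hornerC. Qed.

Lemma dY_eval g x : (g.[x%:P])^`() = (dY g).[x%:P].
Proof.
elim/poly_ind: g => [|p c ih].
  by rewrite /dY map_poly0 !horner0 deriv0.
have -> : dY (p * 'X + c%:P) = dY p * 'X + (c^`())%:P.
  apply/polyP => i; rewrite /dY coefD coefMX coefC !coef_map_id0 ?deriv0 //.
  rewrite coefD coefMX coefC.
  by case: (i == 0%N); rewrite ?deriv0 ?add0r ?addr0.
by rewrite !hornerE derivD derivM -ih derivC mulr0 addr0.
Qed.

Lemma is_derive_X g (x y : R) : is_derive x (1:R) (fun t => g.[t, y]) (dX g).[x, y].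
Proof.
have -> : (fun t => g.[t, y]) = horner (map_poly (horner_eval y) g).
  by apply/funext => t; rewrite evX.
rewrite evX /dX -deriv_map.
exact: is_derive_poly.
Qed.

Lemma is_derive_Y g (x y : R) : is_derive y (1:R) (fun t => g.[x, t]) (dY g).[x, y].
Proof. rewrite -dY_eval; exact: is_derive_poly. Qed.

Lemma cont_ev g : continuous (fun q : R * R => g.[q.1, q.2]).
Proof.
elim/poly_ind: g => [|p c ih].
  by under eq_fun do rewrite !horner0; exact: cst_continuous.
have -> : (fun q : R * R => (p * 'X + c%:P).[q.1, q.2]) =
   (fun q => p.[q.1, q.2] * q.1 + c.[q.2]).
  by apply/funext => q; rewrite !hornerE.
move=> q; apply: cvgD; first apply: cvgM.
- exact: ih.
- exact: cvg_fst.
- apply: (continuous_comp (f := snd) (g := horner c)); first exact: cvg_snd.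
  exact: continuous_horner.
Qed.
End H.
Section G.
Variable R : realType.

Lemma is_derive_expK (K x : R) :
  is_derive x (1:R) (fun y => expR (K * y)) (expR (K * x) * K).
Proof.
have h : is_derive x (1:R) (fun y : R => K * y) K.
  have -> : (fun y : R => K * y) = horner (K%:P * 'X).
    by apply/funext => y; rewrite hornerMX hornerC.
  apply: trigger_derive.
  by rewrite derivM derivC derivX mul0r add0r mulr1 hornerE.
exact: (is_derive1_comp (f := expR) (g := fun y => K * y)).
Qed.

Lemma gronwall (E dE : R -> R) (K s t : R) : s <= t -> 0 <= K ->
  (forall x, s <= x <= t -> is_derive x (1:R) E (dE x) /\ `|dE x| <= K * E x) ->
  (forall x, 0 <= E x) ->
  (E s = 0 -> E t = 0) /\ (E t = 0 -> E s = 0).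
Proof.
move=> st K0 hE E0.
have dF : forall c : R, forall x, s <= x <= t ->
   is_derive x (1:R) (fun y => E y * expR (c * y))
      (E x * (expR (c * x) * c) + expR (c * x) * dE x).
  move=> c x hx; have [h1 _] := hE x hx.
  have h2 := is_derive_expK c x.
  by apply: trigger_derive.
have cont : forall c0 : R, {within `[s, t], continuous (fun y => E y * expR (c0 * y))}.
  move=> c0; apply: derivable_within_continuous => x; rewrite in_itv /= => hx.
  by have [] := dF c0 x hx.
split.
- move=> Es.
  have hom := @ler0_derive1_le_cc R (fun y => E y * expR (- K * y)) s t.
  have : E t * expR (- K * t) <= E s * expR (- K * s).
    apply: hom; last 3 first.
    + by rewrite in_itv /= lexx st.
    + by rewrite in_itv /= lexx st.
    + exact: st.
    + move=> x; rewrite in_itv /= => /andP[h1 h2].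
      by have [] := dF (- K) x (_ : s <= x <= t); rewrite ?(ltW h1) ?(ltW h2).
    + move=> x; rewrite in_itv /= => /andP[h1 h2].
      have hx : s <= x <= t by rewrite (ltW h1) (ltW h2).
      have dd := dF (- K) x hx.
      rewrite derive1E derive_val.
      have [_ b] := hE x hx.
      have ep := expR_gt0 (- K * x).
      move: b; rewrite ler_norml => /andP[b1 b2].
      nra.
    + exact: cont.
  rewrite Es mul0r => h; apply/eqP; rewrite eq_le E0 andbT.
  have ep := expR_gt0 (- K * t); have := E0 t; nra.
- move=> Et.
  have hom := @ger0_derive1_le_cc R (fun y => E y * expR (K * y)) s t.
  have : E s * expR (K * s) <= E t * expR (K * t).
    apply: hom; last 3 first.
    + by rewrite in_itv /= lexx st.
    + by rewrite in_itv /= lexx st.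
    + exact: st.
    + move=> x; rewrite in_itv /= => /andP[h1 h2].
      by have [] := dF K x (_ : s <= x <= t); rewrite ?(ltW h1) ?(ltW h2).
    + move=> x; rewrite in_itv /= => /andP[h1 h2].
      have hx : s <= x <= t by rewrite (ltW h1) (ltW h2).
      have dd := dF K x hx.
      rewrite derive1E derive_val.
      have [_ b] := hE x hx.
      have ep := expR_gt0 (K * x).
      move: b; rewrite ler_norml => /andP[b1 b2].
      nra.
    + exact: cont.
  rewrite Et mul0r => h; apply/eqP; rewrite eq_le E0 andbT.
  have ep := expR_gt0 (K * s); have := E0 s; nra.
Qed.

Lemma cont_rat (A B : {poly R}) (x : R) : B.[x] != 0 ->
  {for x, continuous (fun y => `|A.[y] / B.[y]|)}.
Proof.
move=> Bx; apply: cvg_norm; apply: cvgM.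
  exact: continuous_horner.
apply: cvgV => //; exact: continuous_horner.
Qed.

Lemma ode_uniq (A0 A1 A2 : {poly R}) (u v z : R -> R) (s t : R) :
  s <= t ->
  (forall x, s <= x <= t -> [/\ is_derive x (1:R) u (v x), is_derive x (1:R) v (z x),
      A2.[x] != 0 & A2.[x] * z x + A1.[x] * v x + A0.[x] * u x = 0]) ->
  ((u s = 0 /\ v s = 0) -> (u t = 0 /\ v t = 0)) /\
  ((u t = 0 /\ v t = 0) -> (u s = 0 /\ v s = 0)).
Proof.
move=> st hyp.
pose h := fun y => `|A1.[y] / A2.[y]| + `|A0.[y] / A2.[y]|.
have hc : {within `[s, t], continuous h}.
  apply: continuous_in_subspaceT => x; rewrite inE /= in_itv /= => hx.
  have [_ _ A2x _] := hyp x hx.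
  by apply: cvgD; apply: cont_rat.
have [c _ hM] := EVT_max st hc.
set M := h c.
have M0 : 0 <= M by rewrite /M /h addr_ge0.
pose E := fun y => u y * u y + v y * v y.
pose dE := fun y => 2 * u y * v y + 2 * v y * z y.
have E0 : forall y, 0 <= E y by move=> y; rewrite /E -!expr2 addr_ge0 // sqr_ge0.
have key : forall x, s <= x <= t -> is_derive x (1:R) E (dE x) /\ `|dE x| <= (1 + 3 * M) * E x.
  move=> x hx; have [hu hv A2x eq] := hyp x hx.
  split.
    apply: trigger_derive; rewrite /dE /GRing.scale /=; ring.
  have hMx : h x <= M by apply: hM; rewrite in_itv.
  pose al := A1.[x] / A2.[x]; pose be := A0.[x] / A2.[x].
  have zE : z x = - (al * v x + be * u x).
    have -> : z x = - (A1.[x] * v x + A0.[x] * u x) / A2.[x].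
      apply: (mulfI A2x); rewrite [RHS]mulrC divfK //; lra.
    by rewrite /al /be; field.
  have ha : `|al| <= M by apply: le_trans hMx; rewrite /h lerDl.
  have hb : `|be| <= M by apply: le_trans hMx; rewrite /h lerDr.
  rewrite /dE /E zE.
  have n1 := normr_ge0 (u x); have n2 := normr_ge0 (v x).
  have n3 := normr_ge0 al; have n4 := normr_ge0 be.
  have e1 : `|u x| ^+ 2 = u x * u x by rewrite real_normK ?num_real // expr2.
  have e2 : `|v x| ^+ 2 = v x * v x by rewrite real_normK ?num_real // expr2.
  set U := `|u x| in n1 e1; set V := `|v x| in n2 e2.
  have tri : `|2 * u x * v x + 2 * v x * - (al * v x + be * u x)| <=
      2 * U * V + 2 * `|al| * V * V + 2 * `|be| * U * V.
    apply: le_trans (ler_normD _ _) _.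
    rewrite mulrN normrN -addrA; apply: lerD.
      by rewrite !normrM ger0_norm.
    rewrite mulrDr; apply: le_trans (ler_normD _ _) _.
    apply: lerD; rewrite !normrM ger0_norm //; rewrite /U /V; nra.
  apply: le_trans tri _.
  rewrite -e1 -e2.
  have : 2 * U * V <= U ^+ 2 + V ^+ 2 by have := sqr_ge0 (U - V); rewrite !expr2; nra.
  rewrite !expr2 => h2; nra.
have K0 : 0 <= 1 + 3 * M by rewrite addr_ge0 // mulr_ge0.
have [g1 g2] := @gronwall E dE _ _ _ st K0 key E0.
have Eeq : forall y, E y = 0 <-> u y = 0 /\ v y = 0.
  move=> y; split; last by case=> h1 h2; rewrite /E h1 h2 mul0r addr0.
  rewrite /E -!expr2 => /eqP; rewrite paddr_eq0 ?sqr_ge0 // !sqrf_eq0.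
  by case/andP => /eqP -> /eqP ->.
split=> /Eeq H; apply/Eeq; by [apply: g1 | apply: g2].
Qed.
End G.
Lemma alg_id (R : realType) (G0 G1 G0x G1x G0y G1y a0 a1 a2 u1 v1 u2 v2 z1 z2 : R) :
  a2 != 0 ->
  a2 * z1 + a1 * v1 + a0 * u1 = 0 ->
  a2 * z2 + a1 * v2 + a0 * u2 = 0 ->
  let f1 := G1 * v1 - G0 * u1 in let f2 := G1 * v2 - G0 * u2 in
  let f1x := G1x * v1 + G1 * z1 - (G0x * u1 + G0 * v1) in
  let f2x := G1x * v2 + G1 * z2 - (G0x * u2 + G0 * v2) in
  let f1y := G1y * v1 - G0y * u1 in let f2y := G1y * v2 - G0y * u2 in
  a2 * (G0 * G1y - G1 * G0y) * (f1x * f2 - f1 * f2x) +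
  (a0 * G1 ^+ 2 + a1 * G1 * G0 + a2 * G0 ^+ 2 + a2 * (G1 * G0x - G0 * G1x)) *
   (f1y * f2 - f1 * f2y) = 0.
Proof.
move=> a2n0 e1 e2 /=.
have -> : z1 = - (a1 * v1 + a0 * u1) / a2.
  apply: (mulfI a2n0); rewrite [RHS]mulrC divfK //; lra.
have -> : z2 = - (a1 * v2 + a0 * u2) / a2.
  apply: (mulfI a2n0); rewrite [RHS]mulrC divfK //; lra.
by field.
Qed.
Section M.
Variable R : realType.

Lemma nearI (a b : \bar R) (x : R) : (a < x%:E < b)%E ->
  \forall y \near x, (a < y%:E < b)%E.
Proof.
case/andP => ha hb.
have h1 : \forall y \near x, (a < y%:E)%E.
  move: ha; case: a => [r||] //= ha.
  - rewrite lte_fin in ha; near=> y; rewrite lte_fin; near: y; exact: lt_nbhsr.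
  - by near=> y; exact: ltNyr.
have h2 : \forall y \near x, (y%:E < b)%E.
  move: hb; case: b => [r||] //= hb.
  - rewrite lte_fin in hb; near=> y; rewrite lte_fin; near: y; exact: lt_nbhsl.
  - by near=> y; exact: ltry.
by near=> y; apply/andP; split; [near: y; exact: h1 | near: y; exact: h2].
Unshelve. all: end_near.
Qed.

Lemma convI (a b : \bar R) (s t x : R) : (a < s%:E < b)%E -> (a < t%:E < b)%E ->
  s <= x <= t -> (a < x%:E < b)%E.
Proof.
case/andP=> h1 _; case/andP=> _ h2; case/andP=> h3 h4.
apply/andP; split.
  by apply: lt_le_trans h1 _; rewrite lee_fin.
by apply: le_lt_trans h2; rewrite lee_fin.
Qed.

Lemma der_cont (f : R -> R) (x : R) : derivable f x 1 -> {for x, continuous f}.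
Proof. by move=> h; apply/differentiable_continuous/derivable1_diffP. Qed.

Lemma cont_fst (h : R -> R) (p : R * R) : {for p.1, continuous h} ->
  {for p, continuous (fun q : R * R => h q.1)}.
Proof.
move=> hc; apply: (continuous_comp (f := fst) (g := h)); last exact: hc.
exact: cvg_fst.
Qed.

Lemma near_cont {T : topologicalType} (f g : T -> R) (x : T) :
  (\forall y \near x, f y = g y) -> {for x, continuous g} -> {for x, continuous f}.
Proof.
move=> hn hg.
have fx : f x = g x := nbhs_singleton hn.
have hg' : g @ x --> f x by rewrite fx; exact: hg.
apply: cvg_trans hg'.
apply: near_eq_cvg; near=> y; symmetry; near: y; exact: hn.
Unshelve. all: end_near.
Qed.

Lemma poly_zero_ball (p : {poly R}) (x0 e : R) : 0 < e ->
  (forall y, `|y - x0| < e -> p.[y] = 0) -> p = 0.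
Proof.
move=> e0 hp; apply/eqP; apply/negPn/negP => pn0.
pose n := size p.
pose d := e / (n.+1)%:R.
have d0 : 0 < d by rewrite divr_gt0 // ltr0n.
pose rs := [seq x0 + i%:R * d | i <- iota 0 n].
have := @max_poly_roots _ p rs pn0.
rewrite size_map size_iota ltnn; move=> H; suff : false by []; apply: H.
  apply/allP => y /mapP [i]; rewrite mem_iota add0n => /andP [_ hi] ->.
  rewrite /root; apply/eqP/hp.
  rewrite addrC addKr ger0_norm; last by rewrite mulr_ge0 ?ler0n // ltW.
  have -> : e = (n.+1)%:R * d by rewrite /d mulrC divfK // pnatr_eq0.
  by rewrite ltr_pM2r // ltr_nat ltnS ltnW.
have inj : injective (fun i : nat => x0 + i%:R * d).
  move=> i1 j1 /addrI /(mulIf (lt0r_neq0 d0)).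
  by move/eqP; rewrite eqr_nat => /eqP.
have u : uniq [seq x0 + i%:R * d | i <- iota 0 n] by rewrite (map_inj_uniq inj) iota_uniq.
exact: u.
Qed.

Lemma bipoly_zero (D : {poly {poly R}}) (x0 e : R) : 0 < e ->
  (forall x, `|x - x0| < e -> D.[x%:P] = 0) -> D = 0.
Proof.
move=> e0 hD; apply/eqP; rewrite -swapXY_eq0; apply/eqP/polyP => j.
rewrite coef0; apply: (@poly_zero_ball _ x0 e e0) => x hx.
have := congr1 (fun q : {poly R} => q`_j) (hD x hx).
by rewrite horner_polyC coef_map /= coef0.
Qed.
End M.
Section N.
Variable R : realType.

Lemma lin2_cont (h1 h2 : {poly {poly R}}) (u v : R -> R) (p : R * R) :
  {for p.1, continuous u} -> {for p.1, continuous v} ->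
  {for p, continuous (fun q : R * R => h1.[q.1, q.2] * u q.1 - h2.[q.1, q.2] * v q.1)}.
Proof.
move=> cu cv; apply: cvgB; apply: cvgM.
- exact: cont_ev.
- exact: (@cont_fst R u p cu).
- exact: cont_ev.
- exact: (@cont_fst R v p cv).
Qed.

Lemma der_quot (N D : R -> R) (x dN dD : R) : D x != 0 ->
  is_derive x (1:R) N dN -> is_derive x (1:R) D dD ->
  is_derive x (1:R) (fun t => N t / D t) ((dN * D x - N x * dD) / (D x ^+ 2)).
Proof.
move=> Dx hN hD.
have hV := is_deriveV Dx hD.
apply: trigger_derive.
rewrite /GRing.scale /=; field.
by [].
Qed.

Lemma sol_der (A0 A1 A2 : {poly R}) (I : set R) (w : R -> R) (x : R) :
  ode_solution A0 A1 A2 I w -> I x ->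
  [/\ is_derive x (1:R) w ((derive1 w) x), is_derive x (1:R) ((derive1 w)) ((derive1 (derive1 w)) x) &
   A2.[x] * (derive1 (derive1 w)) x + A1.[x] * (derive1 w) x + A0.[x] * w x = 0].
Proof.
move=> hs Ix; have [h1 h2 h3] := hs x Ix; split => //.
- by have := derivableP h1; rewrite -derive1E.
- by have := derivableP h2; rewrite -derive1E.
Qed.

Lemma ddw_cont (a b : \bar R) (A0 A1 A2 : {poly R}) (w : R -> R) (x : R) :
  ode_solution A0 A1 A2 [set y | (a < y%:E < b)%E] w -> (a < x%:E < b)%E ->
  (forall y, (a < y%:E < b)%E -> A2.[y] != 0) ->
  {for x, continuous ((derive1 (derive1 w)))}.
Proof.
move=> hs Ix A2I.
have [h1 h2 _] := @sol_der _ _ _ _ _ _ hs Ix.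
have c1 : {for x, continuous (derive1 w)} by case: h2 => d2 _; exact: (@der_cont R _ _ d2).
have c0 : {for x, continuous w} by case: h1 => d1 _; exact: (@der_cont R _ _ d1).
apply: (@near_cont R R _ (fun y : R => - (A1.[y] * (derive1 w) y + A0.[y] * w y) / A2.[y])).
  near=> y.
  have Iy : (a < y%:E < b)%E by near: y; exact: nearI.
  have [_ _ e] := @sol_der _ _ _ _ _ _ hs Iy.
  apply: (mulfI (A2I y Iy)); rewrite [RHS]mulrC divfK ?A2I //; lra.
apply: cvgM; last by apply: cvgV; [exact: A2I | exact: continuous_horner].
apply: cvgN; apply: cvgD; apply: cvgM; try exact: continuous_horner.
- exact: c1.
- exact: c0.
Unshelve. all: end_near.
Qed.
End N.
Lemma ev_liftC (R : realType) (A : {poly R}) (x : R) : (liftX A).[x%:P] = (A.[x])%:P.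
Proof. by rewrite /liftX horner_map. Qed.
Theorem mainTheorem3 (R : realType) (A0 A1 A2 : {poly R}) (a b : \bar R)
  (g0 g1 : {poly {poly R}}) (w1 w2 : R -> R) :
  A2 != 0 ->
  (forall x : R, (a < x%:E < b)%E -> A2.[x] != 0) ->
  g1 != 0 ->
  g1 * dY g0 - g0 * dY g1 != 0 ->
  fundamental_system A0 A1 A2 [set x : R | (a < x%:E < b)%E] w1 w2 ->
  let f1 := fun p : R * R => g1.[p.1, p.2] * derive1 w1 p.1 - g0.[p.1, p.2] * w1 p.1 in
  let f2 := fun p : R * R => g1.[p.1, p.2] * derive1 w2 p.1 - g0.[p.1, p.2] * w2 p.1 in
  let U := [set p : R * R | (a < p.1%:E < b)%E /\ f2 p != 0] in
  open U /\
  first_integral (fun p => (Pfield A2 g0 g1).[p.1, p.2])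
                 (fun p => (Qfield A0 A1 A2 g0 g1).[p.1, p.2])
                 U (fun p => f1 p / f2 p).
Proof.
move=> A2n0 A2I g1n0 Dn0 [sol1 sol2 indep] f1 f2 U.
have cw : forall w, ode_solution A0 A1 A2 [set x : R | (a < x%:E < b)%E] w ->
    forall x, (a < x%:E < b)%E ->
    [/\ {for x, continuous w}, {for x, continuous (derive1 w)} &
        {for x, continuous (derive1 (derive1 w))}].
  move=> w sw x Ix; have [h1 h2 _] := @sol_der _ _ _ _ _ _ _ sw Ix.
  split; last exact: (@ddw_cont R a b A0 A1 A2 w x sw Ix A2I).
  - by case: h1 => d1 _; exact: (@der_cont R _ _ d1).
  - by case: h2 => d2 _; exact: (@der_cont R _ _ d2).
have f2c : forall p, (a < p.1%:E < b)%E -> {for p, continuous f2}.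
  move=> p Ip; have [c0 c1 _] := cw _ sol2 _ Ip.
  exact: (@lin2_cont R g1 g0 _ _ p c1 c0).
have Uopen : open U.
  rewrite openE => p [Ip nz].
  have n1 : \forall q \near p, (a < q.1%:E < b)%E.
    exact: (@cvg_fst _ _ (nbhs p.1) (nbhs p.2) _ _ (@nearI R a b p.1 Ip)).
  have n2 : \forall q \near p, f2 q != 0.
    exact: (cvgr_neq0 _ (f2c p Ip) nz).
  by near=> q; split; [near: q; exact: n1 | near: q; exact: n2].
split => //.
pose Fx (w : R -> R) (q : R * R) := (dX g1).[q.1, q.2] * derive1 w q.1
   + g1.[q.1, q.2] * derive1 (derive1 w) q.1
   - ((dX g0).[q.1, q.2] * w q.1 + g0.[q.1, q.2] * derive1 w q.1).
pose Fy (w : R -> R) (q : R * R) :=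
   (dY g1).[q.1, q.2] * derive1 w q.1 - (dY g0).[q.1, q.2] * w q.1.
pose Hx q := (Fx w1 q * f2 q - f1 q * Fx w2 q) / (f2 q ^+ 2).
pose Hy q := (Fy w1 q * f2 q - f1 q * Fy w2 q) / (f2 q ^+ 2).
have derF : forall w, ode_solution A0 A1 A2 [set x : R | (a < x%:E < b)%E] w ->
    forall x y, (a < x%:E < b)%E ->
    is_derive x (1:R) (fun t => g1.[t, y] * derive1 w t - g0.[t, y] * w t) (Fx w (x, y)).
  move=> w sw x y Ix; have [h1 h2 _] := @sol_der _ _ _ _ _ _ _ sw Ix.
  have k1 := @is_derive_X _ g1 x y; have k0 := @is_derive_X _ g0 x y.
  apply: trigger_derive; rewrite /Fx /GRing.scale /=; ring.
have derFy : forall w x y,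
    is_derive y (1:R) (fun t => g1.[x, t] * derive1 w x - g0.[x, t] * w x) (Fy w (x, y)).
  move=> w x y.
  have k1 := @is_derive_Y _ g1 x y; have k0 := @is_derive_Y _ g0 x y.
  apply: trigger_derive; rewrite /Fy /GRing.scale /=; ring.
have dHx : forall q, U q ->
    is_derive q.1 (1:R) (fun t => f1 (t, q.2) / f2 (t, q.2)) (Hx q).
  case=> x y [Ix nz] /=.
  exact: (@der_quot R (fun t => f1 (t, y)) (fun t => f2 (t, y)) x _ _ nz
            (derF w1 sol1 x y Ix) (derF w2 sol2 x y Ix)).
have dHy : forall q, U q ->
    is_derive q.2 (1:R) (fun t => f1 (q.1, t) / f2 (q.1, t)) (Hy q).
  case=> x y [Ix nz] /=.
  exact: (@der_quot R (fun t => f1 (x, t)) (fun t => f2 (x, t)) y _ _ nz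
            (derFy w1 x y) (derFy w2 x y)).
have pdxE : forall q, U q -> pdx (fun p => f1 p / f2 p) q = Hx q.
  move=> q Uq; rewrite /pdx derive1E; have := dHx q Uq; by case.
have pdyE : forall q, U q -> pdy (fun p => f1 p / f2 p) q = Hy q.
  move=> q Uq; rewrite /pdy derive1E; have := dHy q Uq; by case.
have Fxc : forall w, ode_solution A0 A1 A2 [set x : R | (a < x%:E < b)%E] w ->
    forall p : R * R, (a < p.1%:E < b)%E -> {for p, continuous (Fx w)}.
  move=> w sw p Ip; have [c0 c1 c2] := cw w sw p.1 Ip.
  have -> : Fx w = (fun q => (fun q : R * R => (dX g1).[q.1, q.2] * derive1 w q.1 - (dX g0).[q.1, q.2] * w q.1) q
      + (fun q : R * R => g1.[q.1, q.2] * derive1 (derive1 w) q.1 - g0.[q.1, q.2] * derive1 w q.1) q).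
    by apply/funext => q; rewrite /Fx /=; ring.
  apply: cvgD; [exact: (@lin2_cont R _ _ _ _ p c1 c0) | exact: (@lin2_cont R _ _ _ _ p c2 c1)].
have Fyc : forall w, ode_solution A0 A1 A2 [set x : R | (a < x%:E < b)%E] w ->
    forall p : R * R, (a < p.1%:E < b)%E -> {for p, continuous (Fy w)}.
  move=> w sw p Ip; have [c0 c1 c2] := cw w sw p.1 Ip.
  exact: (@lin2_cont R _ _ _ _ p c1 c0).
have f1c : forall p : R * R, (a < p.1%:E < b)%E -> {for p, continuous f1}.
  move=> p Ip; have [c0 c1 _] := cw _ sol1 _ Ip.
  exact: (@lin2_cont R g1 g0 _ _ p c1 c0).
have Unb : forall p, U p -> \forall q \near p, U q.
  by move=> p Up; move: Uopen; rewrite openE => /(_ p Up).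
have Hxc : forall p, U p -> {for p, continuous Hx}.
  move=> p [Ip nz]; apply: cvgM.
    apply: cvgB; apply: cvgM.
    - exact: Fxc sol1 p Ip.
    - exact: f2c p Ip.
    - exact: f1c p Ip.
    - exact: Fxc sol2 p Ip.
  apply: cvgV; first by rewrite sqrf_eq0.
  exact: (cvgM (f2c p Ip) (f2c p Ip)).
have Hyc : forall p, U p -> {for p, continuous Hy}.
  move=> p [Ip nz]; apply: cvgM.
    apply: cvgB; apply: cvgM.
    - exact: Fyc sol1 p Ip.
    - exact: f2c p Ip.
    - exact: f1c p Ip.
    - exact: Fyc sol2 p Ip.
  apply: cvgV; first by rewrite sqrf_eq0.
  exact: (cvgM (f2c p Ip) (f2c p Ip)).
split.
- move=> p Up; split.
  + by have := dHx p Up; case.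
  + by have := dHy p Up; case.
  + apply: (@near_cont R _ _ Hx p); last exact: Hxc.
    by near=> q; apply: pdxE; near: q; exact: Unb.
  + apply: (@near_cont R _ _ Hy p); last exact: Hyc.
    by near=> q; apply: pdyE; near: q; exact: Unb.
- move=> p Up; rewrite pdxE // pdyE //.
  case: p Up => x y [Ix nz] /=.
  have [_ _ e1] := @sol_der _ _ _ _ _ _ _ sol1 Ix.
  have [_ _ e2] := @sol_der _ _ _ _ _ _ _ sol2 Ix.
  have A2x := A2I x Ix.
  move: nz; rewrite /Hx /Hy /Fx /Fy /f1 /f2 /Pfield /Qfield /= => nz.
  have -> : derive1 (derive1 w1) x = - (A1.[x] * derive1 w1 x + A0.[x] * w1 x) / A2.[x].
    apply: (mulfI A2x); rewrite [RHS]mulrC divfK //; lra.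
  have -> : derive1 (derive1 w2) x = - (A1.[x] * derive1 w2 x + A0.[x] * w2 x) / A2.[x].
    apply: (mulfI A2x); rewrite [RHS]mulrC divfK //; lra.
  rewrite !expr2 !(hornerD, hornerN, hornerM, ev_liftC, hornerC).
  field.
  by rewrite nz A2x.
move=> V oV VU [p0 Vp0].
case: (pselect (exists p q, [/\ V p, V q & f1 p / f2 p != f1 q / f2 q])) => // hne.
exfalso.
pose c := f1 p0 / f2 p0.
have F1 : forall q, V q -> f1 q = c * f2 q.
  move=> q Vq; have nz := (VU q Vq).2.
  have -> : c = f1 q / f2 q.
    apply/eqP; apply/negPn/negP => neq; apply: hne.
    by exists p0, q; split.
  by rewrite divfK.
have [e e0 hb] : nbhs_ball p0 V.
  by apply/nbhs_ballP; move: oV; rewrite openE => /(_ p0 Vp0).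
have hb' : forall x y, `|p0.1 - x| < e -> `|p0.2 - y| < e -> V (x, y).
  move=> x y hx hy; apply: hb; split => /=; by rewrite -ball_normE.
pose w := fun t => w1 t - c * w2 t.
pose dw := fun t => derive1 w1 t - c * derive1 w2 t.
pose ddw := fun t => derive1 (derive1 w1) t - c * derive1 (derive1 w2) t.
have hyp : forall s, (a < s%:E < b)%E ->
   [/\ is_derive s (1:R) w (dw s), is_derive s (1:R) dw (ddw s),
       A2.[s] != 0 & A2.[s] * ddw s + A1.[s] * dw s + A0.[s] * w s = 0].
  move=> s Is.
  have [h1 h2 e1] := @sol_der _ _ _ _ _ _ _ sol1 Is.
  have [k1 k2 e2] := @sol_der _ _ _ _ _ _ _ sol2 Is.
  split; first exact: (is_deriveB h1 (is_deriveZ c k1));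
    first exact: (is_deriveB h2 (is_deriveZ c k2));
    first exact: A2I.
  have -> : A2.[s] * ddw s + A1.[s] * dw s + A0.[s] * w s =
     (A2.[s] * derive1 (derive1 w1) s + A1.[s] * derive1 w1 s + A0.[s] * w1 s)
     - c * (A2.[s] * derive1 (derive1 w2) s + A1.[s] * derive1 w2 s + A0.[s] * w2 s).
    by rewrite /ddw /dw /w; ring.
  by rewrite e1 e2 mulr0 subr0.
have Dx : forall x, `|x - p0.1| < e -> (g1 * dY g0 - g0 * dY g1).[x%:P] = 0.
  move=> x hx.
  have hx' : `|p0.1 - x| < e by rewrite distrC.
  have Ix : (a < x%:E < b)%E by have := (VU _ (hb' x p0.2 hx' _)).1; apply; rewrite subrr normr0.
  case: (pselect (w x = 0 /\ dw x = 0)) => [[wx0 dwx0] | hnz].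
    exfalso.
    have wz : forall t, (a < t%:E < b)%E -> w t = 0.
      move=> t It; case: (leP x t) => xt.
        have H : forall s, x <= s <= t -> _ := fun s hs => hyp s (@convI R _ _ _ _ _ Ix It hs).
        have [f _] := @ode_uniq R A0 A1 A2 w dw ddw x t xt H.
        exact: (f (conj wx0 dwx0)).1.
      have H : forall s, t <= s <= x -> _ := fun s hs => hyp s (@convI R _ _ _ _ _ It Ix hs).
      have [_ f] := @ode_uniq R A0 A1 A2 w dw ddw t x (ltW xt) H.
      exact: (f (conj wx0 dwx0)).1.
    have := indep 1 (- c).
    case.
      by move=> t It; rewrite mul1r mulNr; exact: wz t It.
    by move/eqP; rewrite oner_eq0.
  have Pz : g1.[x%:P] * (dw x)%:P - g0.[x%:P] * (w x)%:P = 0.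
    apply: (@poly_zero_ball R _ p0.2 e e0) => y hy.
    have hy' : `|p0.2 - y| < e by rewrite distrC.
    have E := F1 _ (hb' x y hx' hy'); rewrite /f1 /f2 /= in E.
    rewrite hornerD hornerN !hornerM !hornerC.
    have -> : g1.[x, y] * dw x - g0.[x, y] * w x =
      (g1.[x, y] * derive1 w1 x - g0.[x, y] * w1 x) - c * (g1.[x, y] * derive1 w2 x - g0.[x, y] * w2 x).
      by rewrite /dw /w; ring.
    by rewrite E subrr.
  have Pd := congr1 (@deriv _) Pz.
  rewrite derivB !derivM !derivC !mulr0 !addr0 !dY_eval ?deriv0 in Pd.
  have e1 := subr0_eq Pz; have e2 := subr0_eq Pd.
  rewrite hornerD hornerN !hornerM.
  have k1 : (g1.[x%:P] * (dY g0).[x%:P] - g0.[x%:P] * (dY g1).[x%:P]) * (w x)%:P = 0.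
    transitivity (g1.[x%:P] * ((dY g0).[x%:P] * (w x)%:P) - (dY g1).[x%:P] * (g0.[x%:P] * (w x)%:P)); first ring.
    rewrite -e1 -e2; ring.
  have k2 : (g1.[x%:P] * (dY g0).[x%:P] - g0.[x%:P] * (dY g1).[x%:P]) * (dw x)%:P = 0.
    transitivity ((dY g0).[x%:P] * (g1.[x%:P] * (dw x)%:P) - g0.[x%:P] * ((dY g1).[x%:P] * (dw x)%:P)); first ring.
    rewrite e1 e2; ring.
  case: (eqVneq (w x) 0) => wx.
    have dwx : dw x != 0 by apply/eqP => h; apply: hnz.
    by move/eqP: k2; rewrite mulf_eq0 polyC_eq0 (negbTE dwx) orbF => /eqP.
  by move/eqP: k1; rewrite mulf_eq0 polyC_eq0 (negbTE wx) orbF => /eqP.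
have := @bipoly_zero R _ p0.1 e e0 Dx.
by move/eqP; rewrite (negbTE Dn0).
Unshelve. all: end_near.
Qed.
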